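(* Suppose $w\ge 4$ and $E\subset Z(W)$ with $|E|>\frac12|Z(W)|$. Then for every integer $n\equiv 8\pmod{24}$ there exist $b_1,\dots,b_8\in E$ with $n\equiv b_1+\cdots+b_8\pmod W$.
   Context: $W=8\prod_{2<p<w}p$ (product over primes $p$), $[W]^*=\{a\in\{1,\dots,W\}:\gcd(a,W)=1\}$, and $Z(W)=\{b\in[W]^*: b\equiv h^2\pmod W\text{ for some integer }h\}$ is the set of reduced quadratic residues modulo $W$. *)

(* Defs.v *)
From mathcomp Require Import all_boot all_order all_algebra.
Set Implicit Arguments. Unset Strict Implicit. Unset Printing Implicit Defensive.

Definition Wmod (w : nat) : nat := 8 * \prod_(3 <= p < w | prime p) p.

(* Since W > 1, the residue W (= 0) is not coprime to W, so {1..W} coprime to W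
   corresponds exactly to the nonzero residues in 'I_W coprime to W. *)
Definition Zres (W : nat) : {set 'I_W} :=
  [set a : 'I_W | coprime a W && [exists h : 'I_W, (h ^ 2) %% W == a]].

(* Main.v *)
Require Import Defs.
From mathcomp Require Import all_boot all_order all_algebra.
From mathcomp Require Import zify ring.
Set Implicit Arguments. Unset Strict Implicit. Unset Printing Implicit Defensive.
Import GRing.Theory.

Lemma lt_pred a b : (a < b)%N -> (a <= b.-1)%N.
Proof. lia. Qed.

Lemma arith_pos p q s0 s1 u : (5 <= p)%N -> (q <= s0)%N -> (q <= s1)%N -> (p <= q.*2.+1)%N ->
  (minn p (s0 + s1).-1 <= u)%N -> (0 < u)%N.
Proof. lia. Qed.

Lemma arith_final p q s0 s1 s2 s3 a b u : (5 <= p)%N -> (p <= q.*2.+1)%N ->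
  (q <= s0)%N -> (q <= s1)%N -> (q <= s2)%N -> (q <= s3)%N ->
  (minn p (s0 + s1).-1 <= a)%N -> (minn p (s2 + s3).-1 <= b)%N ->
  (minn p (a + b).-1 <= u)%N -> (p <= u)%N.
Proof. lia. Qed.

Section CDsec.
Variable p : nat.
Hypothesis pP : prime p.
Local Open Scope ring_scope.

Definition sumset (A B : {set 'F_p}) := [set a + b | a in A, b in B].

Lemma sumset_card_ge_l (A B : {set 'F_p}) b : b \in B -> (#|A| <= #|sumset A B|)%N.
Proof.
move=> bB.
have -> : #|A| = #|[set a + b | a in A]|.
  by rewrite card_imset //; apply: addIr.
apply: subset_leq_card; apply/subsetP => x /imsetP [a aA ->].
by apply/imset2P; exists a b.
Qed.

Lemma CD_aux n (A B : {set 'F_p}) : (#|B| <= n)%N -> A != set0 -> B != set0 ->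
  (minn p (#|A| + #|B|).-1 <= #|sumset A B|)%N.
Proof.
elim: n A B => [|n IH] A B hB hA0 hB0.
  by move: hB; rewrite leqn0 cards_eq0 (negbTE hB0).
have [b0 b0B] := set0Pn _ hB0.
case: (leqP #|B| 1) => hB1.
  have hB1' : #|B| = 1%N.
    by apply/eqP; rewrite eqn_leq hB1 card_gt0.
  rewrite hB1' addn1 /=.
  apply: leq_trans (geq_minr _ _) _.
  exact: sumset_card_ge_l b0B.
case: (boolP [forall e in A, [forall b in B, e + b - b0 \in A]]) => hall.
  have /set0Pn [b1 b1B] : B :\ b0 != set0.
    rewrite -card_gt0; rewrite (cardsD1 b0 B) b0B in hB1.
    by [].
  rewrite !inE in b1B; case/andP: b1B => b10 b1B.
  set d := b1 - b0.
  have d0 : d != 0 by rewrite subr_eq0.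
  have [a aA] := set0Pn _ hA0.
  have stepA : forall x, x \in A -> x + d \in A.
    move=> x xA; move/forallP: hall => /(_ x); rewrite xA /=.
    move/forallP => /(_ b1); rewrite b1B /= => h.
    by rewrite /d addrA.
  have iterA : forall k, a + d *+ k \in A.
    elim=> [|k IHk]; first by rewrite mulr0n addr0.
    by rewrite mulrS addrCA addrC; apply: stepA.
  have AT : A = setT.
    apply/setP => y; rewrite inE.
    have -> : y = a + d *+ (val ((y - a) / d)).
      by rewrite -mulr_natr natr_Zp mulrC divfK // addrC subrK.
    exact: iterA.
  apply: leq_trans (geq_minl _ _) _.
  have := sumset_card_ge_l A b0B.
  by rewrite AT cardsT card_Fp.
have [e eA hb] : exists2 e, e \in A & ~~ [forall b in B, e + b - b0 \in A].
  rewrite negb_forall in hall; case/existsP: hall => e.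
  by rewrite negb_imply => /andP [eA he]; exists e.
rewrite negb_forall in hb; case/existsP: hb => b2; rewrite negb_imply.
case/andP => b2B hb2.
pose f := fun b => e + b - b0.
have finj : injective f by move=> x y; rewrite /f => /addIr /addrI.
pose B' := [set b in B | f b \in A].
pose T := f @: B.
pose A' := A :|: T.
have b0B' : b0 \in B' by rewrite inE b0B /f addrK eA.
have B'lt : (#|B'| < #|B|)%N.
  apply: proper_card; apply/properP; split.
    by apply/subsetP => x; rewrite inE => /andP [].
  by exists b2 => //; rewrite inE b2B (negbTE hb2).
have hIH := IH A' B' _ _ _.
have card_eq : (#|A'| + #|B'| = #|A| + #|B|)%N.
  have -> : #|B'| = #|A :&: T|.
    suff -> : A :&: T = f @: B' by rewrite (card_imset _ finj).
    apply/setP => x; rewrite inE; apply/andP/imsetP.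
      case=> xA /imsetP [b bB xe]; exists b => //.
      by rewrite inE bB -xe xA.
    case=> b; rewrite inE => /andP [bB fbA] ->; split => //.
    by apply/imsetP; exists b.
  by rewrite /A' cardsUI /T (card_imset _ finj).
have sub : sumset A' B' \subset sumset A B.
  apply/subsetP => x /imset2P [a' b' a'A' b'B' ->].
  move: a'A'; rewrite inE => /orP [a'A|].
    apply/imset2P; exists a' b' => //.
    by move: b'B'; rewrite inE => /andP [].
  case/imsetP => b bB ->.
  move: b'B'; rewrite inE => /andP [b'B fb'A].
  apply/imset2P; exists (f b') b => //.
  by rewrite /f; ring.
apply: leq_trans (subset_leq_card sub).
rewrite -card_eq.
apply: hIH.
- by rewrite -ltnS; apply: leq_trans B'lt hB.
- by apply/set0Pn; exists e; rewrite inE eA.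
- by apply/set0Pn; exists b0.
Qed.

Lemma CD (A B : {set 'F_p}) : A != set0 -> B != set0 ->
  (minn p (#|A| + #|B|).-1 <= #|sumset A B|)%N.
Proof. exact: CD_aux. Qed.

Lemma CD_q (X Y : {set 'F_p}) q : X != set0 -> Y != set0 ->
  (q < #|X| + #|Y|)%N -> (q <= p)%N -> (q <= #|sumset X Y|)%N /\ sumset X Y != set0.
Proof.
move=> Xn Yn h1 h2; have C := CD Xn Yn.
have h : (q <= #|sumset X Y|)%N.
  apply: leq_trans C; rewrite leq_min h2 /=; exact: lt_pred.
split => //; rewrite -card_gt0.
have [x xX] := set0Pn _ Xn; have [y yY] := set0Pn _ Yn.
rewrite card_gt0; apply/set0Pn; exists (x + y); apply/imset2P; exists x y => //.
Qed.

Lemma four_sum (X0 Y0 X1 Y1 X2 Y2 X3 Y3 : {set 'F_p}) q :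
  (5 <= p)%N -> (p <= q.*2.+1)%N -> (q <= p)%N ->
  X0 != set0 -> Y0 != set0 -> X1 != set0 -> Y1 != set0 ->
  X2 != set0 -> Y2 != set0 -> X3 != set0 -> Y3 != set0 ->
  (q < #|X0| + #|Y0|)%N -> (q < #|X1| + #|Y1|)%N ->
  (q < #|X2| + #|Y2|)%N -> (q < #|X3| + #|Y3|)%N ->
  forall t : 'F_p, exists u0 u1 u2 u3 u4 u5 u6 u7,
    [/\ u0 \in X0, u1 \in Y0, u2 \in X1, u3 \in Y1 &
    [/\ u4 \in X2, u5 \in Y2, u6 \in X3, u7 \in Y3 &
        t = u0 + u1 + u2 + u3 + u4 + u5 + u6 + u7]].
Proof.
move=> p5 pq qp X0n Y0n X1n Y1n X2n Y2n X3n Y3n h0 h1 h2 h3 t.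
have [c0 n0] := CD_q X0n Y0n h0 qp.
have [c1 n1] := CD_q X1n Y1n h1 qp.
have [c2 n2] := CD_q X2n Y2n h2 qp.
have [c3 n3] := CD_q X3n Y3n h3 qp.
have C01 := CD n0 n1; have C23 := CD n2 n3.
have ne (S : {set 'F_p}) : (0 < #|S|)%N -> S != set0 by rewrite card_gt0.
have n01 : sumset (sumset X0 Y0) (sumset X1 Y1) != set0 by apply: ne; exact: arith_pos p5 c0 c1 pq C01.
have n23 : sumset (sumset X2 Y2) (sumset X3 Y3) != set0 by apply: ne; exact: arith_pos p5 c2 c3 pq C23.
have CU := CD n01 n23.
have UT : sumset (sumset (sumset X0 Y0) (sumset X1 Y1)) (sumset (sumset X2 Y2) (sumset X3 Y3)) = setT.
  apply/eqP; rewrite eqEcard subsetT cardsT card_Fp //; exact: arith_final p5 pq c0 c1 c2 c3 C01 C23 CU.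
have : t \in sumset (sumset (sumset X0 Y0) (sumset X1 Y1)) (sumset (sumset X2 Y2) (sumset X3 Y3)).
  by rewrite UT inE.
case/imset2P => s01 s23 /imset2P [s0 s1 /imset2P [u0 u1 u0X u1Y ->]
   /imset2P [u2 u3 u2X u3Y ->] ->] /imset2P [s2 s3 /imset2P [u4 u5 u4X u5Y ->]
   /imset2P [u6 u7 u6X u7Y ->] ->] ->.
exists u0, u1, u2, u3, u4, u5, u6, u7; split => //; split => //.
by rewrite !addrA.
Qed.

End CDsec.


Section Qsec.
Variable p : nat.
Hypothesis pP : prime p.
Local Open Scope ring_scope.

Definition Qp := [set x : 'F_p | (x != 0) && [exists h : 'F_p, h * h == x]].

Lemma valFp_lt (x : 'F_p) : (val x < p)%N.
Proof. by have := ltn_ord x; rewrite [X in (_ < X)%N -> _]Fp_cast. Qed.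

Lemma Fp_natr_eq0 k : ((k%:R : 'F_p) == 0) = (k %% p == 0)%N.
Proof. by rewrite -(inj_eq (@ord_inj _)) val_Fp_nat. Qed.

Lemma card_Qp : odd p -> (p./2 <= #|Qp|)%N.
Proof.
move=> op.
have hp := odd_double_half p; rewrite op -addnn in hp.
pose f := fun i : 'I_(p./2) => ((i.+1)%:R * (i.+1)%:R : 'F_p).
have finj : injective f.
  move=> i j; rewrite /f => /eqP.
  rewrite -subr_eq0.
  have -> : (i.+1)%:R * (i.+1)%:R - (j.+1)%:R * (j.+1)%:R =
     ((i.+1)%:R - (j.+1)%:R) * ((i.+1 + j.+1)%:R : 'F_p).
    by rewrite natrD; ring.
  rewrite mulf_eq0 => /orP [|].
    rewrite subr_eq0 => /eqP h; have := congr1 (@nat_of_ord _) h.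
    rewrite !val_Fp_nat // !modn_small; last 2 first.
    - have := ltn_ord j; lia.
    - have := ltn_ord i; lia.
    by move=> [] /val_inj.
  rewrite Fp_natr_eq0 modn_small; first by [].
  have := ltn_ord i; have := ltn_ord j; lia.
have -> : p./2 = #|f @: setT|.
  by rewrite card_imset // cardsT card_ord.
apply: subset_leq_card; apply/subsetP => x /imsetP [i _ ->].
rewrite inE; apply/andP; split.
  rewrite /f mulf_neq0 // Fp_natr_eq0 modn_small //; have := ltn_ord i; lia.
by apply/existsP; exists (i.+1)%:R.
Qed.

End Qsec.


Section Step.
Variables M p : nat.
Hypotheses (M0 : (0 < M)%N) (pP : prime p) (co : coprime M p).
Local Open Scope ring_scope.

Lemma Npos : (0 < M * p)%N.
Proof. by rewrite muln_gt0 M0 prime_gt0. Qed.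

Definition chin (x : 'F_p) (y : 'I_M) : 'I_(M * p) :=
  Ordinal (ltn_pmod (chinese M p y x) Npos).

Lemma chin_modM x y : (chin x y %% M = y)%N.
Proof.
by rewrite /= modn_dvdm ?dvdn_mulr // chinese_modl // modn_small.
Qed.

Lemma chin_modp x y : (chin x y %% p = x)%N.
Proof.
by rewrite /= modn_dvdm ?dvdn_mull // chinese_modr // modn_small // valFp_lt.
Qed.

Definition projM (z : 'I_(M * p)) : 'I_M := Ordinal (ltn_pmod z M0).
Definition projp (z : 'I_(M * p)) : 'F_p := (z : nat)%:R.

Lemma chin_proj z : chin (projp z) (projM z) = z.
Proof.
apply: val_inj => /=.
rewrite val_Fp_nat //.
have := chinese_mod co z; rewrite (modn_small (ltn_ord z)) => <-.
by [].
Qed.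

Lemma chin_inj x y x' y' : chin x y = chin x' y' -> x = x' /\ y = y'.
Proof.
move=> h; split.
  by apply: ord_inj; rewrite -(chin_modp x y) -(chin_modp x' y') h.
by apply: val_inj; rewrite /= -(chin_modM x y) -(chin_modM x' y') h.
Qed.

Lemma projp_chin x y : projp (chin x y) = x.
Proof. by apply: ord_inj; rewrite val_Fp_nat // chin_modp. Qed.

Lemma projM_chin x y : projM (chin x y) = y.
Proof. by apply: val_inj; rewrite /= chin_modM. Qed.

Lemma coprime_Fp (x : 'F_p) : coprime x p = (x != 0).
Proof.
rewrite coprime_sym prime_coprime //.
have := valFp_lt pP x.
rewrite -(inj_eq (@ord_inj _)) /=.
case: (nat_of_ord x) => [|k] hk; first by rewrite dvdn0.
apply/negP => /dvdn_leq; lia.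
Qed.

Lemma Fp_mulE (a b : 'F_p) : nat_of_ord (a * b) = ((a : nat) * b %% p)%N.
Proof. by rewrite -[a]natr_Zp -[b]natr_Zp -natrM val_Fp_nat // !natr_Zp. Qed.

Lemma chin_Zres x y : (chin x y \in Zres (M * p)) = (x \in Qp p) && (y \in Zres M).
Proof.
rewrite !inE coprimeMr -coprime_modl chin_modM -(coprime_modl _ p) chin_modp.
rewrite coprime_Fp.
case cy: (coprime y M); case x0: (x != 0) => //=; rewrite ?andbF //.
apply/existsP/idP.
  case=> h /eqP hh; apply/andP; split.
    apply/existsP; exists (projp h); apply/eqP.
    apply: ord_inj; rewrite Fp_mulE /= val_Fp_nat // modnMm mulnn.
    by rewrite -(modn_dvdm _ (dvdn_mull M (dvdnn p))) hh chin_modp.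
  apply/existsP; exists (projM h); apply/eqP => /=.
  by rewrite modnXm -(modn_dvdm _ (dvdn_mulr p (dvdnn M))) hh chin_modM.
case/andP => /existsP [hx /eqP hhx] /existsP [hy /eqP hhy].
exists (chin hx hy); apply/eqP.
rewrite -[RHS](modn_small (ltn_ord (chin x y))).
apply/eqP; rewrite chinese_remainder //.
rewrite -modnXm chin_modM hhy chin_modM eqxx /=.
rewrite -modnXm chin_modp chin_modp -hhx Fp_mulE.
by rewrite mulnn.
Qed.

Definition fib (A : {set 'I_(M * p)}) (x : 'F_p) := [set y : 'I_M | chin x y \in A].

Lemma card_fib_sum (A : {set 'I_(M * p)}) : (#|A| <= \sum_(x : 'F_p) #|fib A x|)%N.
Proof.
rewrite -sum1_card (partition_big projp xpredT) //=.
apply: leq_sum => x _.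
rewrite sum1dep_card.
have -> : #|[set z | (z \in A) && (projp z == x)]| =
          #|projM @: [set z | (z \in A) && (projp z == x)]|.
  rewrite card_in_imset // => z1 z2; rewrite !inE => /andP [_ /eqP h1] /andP [_ /eqP h2] e.
  by rewrite -(chin_proj z1) -(chin_proj z2) h1 h2 e.
apply: subset_leq_card; apply/subsetP => y /imsetP [z].
rewrite inE => /andP [zA /eqP zx] ->.
by rewrite inE -zx chin_proj.
Qed.

Lemma fib_sub (A : {set 'I_(M * p)}) x : A \subset Zres (M * p) ->
  fib A x \subset Zres M.
Proof.
move=> /subsetP sA; apply/subsetP => y; rewrite inE => /sA.
by rewrite chin_Zres => /andP [].
Qed.

Lemma fib_Q (A : {set 'I_(M * p)}) x y : A \subset Zres (M * p) ->
  y \in fib A x -> x \in Qp p.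
Proof.
move=> /subsetP sA; rewrite inE => /sA.
by rewrite chin_Zres => /andP [].
Qed.

Lemma card_Zres_ge : (#|Qp p| * #|Zres M| <= #|Zres (M * p)|)%N.
Proof.
rewrite -cardsX.
rewrite -(card_imset _ (fun u v (h : chin u.1 u.2 = chin v.1 v.2) =>
   let: conj h1 h2 := chin_inj h in
   (match u, v return u.1 = v.1 -> u.2 = v.2 -> u = v with
    | (a, b), (c, d) => fun e1 e2 => f_equal2 pair e1 e2 end) h1 h2)).
apply: subset_leq_card; apply/subsetP => z /imsetP [[x y]].
by rewrite inE /= => /andP [xQ yZ] ->; rewrite chin_Zres xQ.
Qed.

Lemma count_lt K c : (\sum_(t < K) (t < c) = minn c K)%N.
Proof.
elim: K => [|K IH]; first by rewrite big_ord0 minn0.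
rewrite big_ord_recr /= IH; lia.
Qed.

Lemma count_ge K c : (\sum_(t < K) (K - t <= c) = minn c K)%N.
Proof.
elim: K => [|K IH]; first by rewrite big_ord0 minn0.
rewrite big_ord_recl /= subn0.
under eq_bigr => t _ do rewrite /bump /= add1n subSS.
rewrite IH; lia.
Qed.

Lemma card_setE (T : finType) (P : pred T) : #|[set x | P x]| = (\sum_x (P x : nat))%N.
Proof.
rewrite -sum1dep_card big_mkcond /=; apply: eq_bigr => x _.
by case: (P x).
Qed.

Lemma levelset (A B : {set 'I_(M * p)}) :
  A \subset Zres (M * p) -> B \subset Zres (M * p) ->
  (#|Zres (M * p)| < #|A| + #|B|)%N ->
  exists X Y : {set 'F_p}, [/\ X != set0, Y != set0,
     (#|Qp p| < #|X| + #|Y|)%N &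
     forall x y, x \in X -> y \in Y -> (#|Zres M| < #|fib A x| + #|fib B y|)%N].
Proof.
move=> sA sB hAB.
set K := #|Zres M|; set q := #|Qp p|.
pose a x := #|fib A x|; pose b x := #|fib B x|.
have aK x : (a x <= K)%N by apply: subset_leq_card; apply: fib_sub.
have bK x : (b x <= K)%N by apply: subset_leq_card; apply: fib_sub.
pose X (t : 'I_K) := [set x | (t < a x)%N].
pose Y (t : 'I_K) := [set x | (K - t <= b x)%N].
have XQ t : X t \subset Qp p.
  apply/subsetP => x; rewrite inE => h.
  have : fib A x != set0 by rewrite -card_gt0; apply: leq_ltn_trans h.
  by case/set0Pn => y; apply: fib_Q.
have YQ t : Y t \subset Qp p.
  apply/subsetP => x; rewrite inE => h.
  have : fib B x != set0.
    rewrite -card_gt0; apply: leq_trans h; have := ltn_ord t; lia.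
  by case/set0Pn => y; apply: fib_Q.
have sumX : (\sum_(t < K) #|X t| = \sum_x a x)%N.
  have -> : (\sum_(t<K) #|X t| = \sum_(t<K) \sum_x (t < a x : nat))%N.
    by apply: eq_bigr => t _; apply: card_setE.
  rewrite exchange_big /=; apply: eq_bigr => x _.
  by rewrite count_lt; apply/minn_idPl.
have sumY : (\sum_(t < K) #|Y t| = \sum_x b x)%N.
  have -> : (\sum_(t<K) #|Y t| = \sum_(t<K) \sum_x (K - t <= b x : nat))%N.
    by apply: eq_bigr => t _; apply: card_setE.
  rewrite exchange_big /=; apply: eq_bigr => x _.
  by rewrite (count_ge K (b x)); apply/minn_idPl.
case: (boolP [exists t : 'I_K, (q < #|X t| + #|Y t|)%N]) => [/existsP [t ht]|hall].
  exists (X t), (Y t); split => //.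
  - apply/negP => /eqP X0; move: ht; rewrite X0 cards0 add0n.
    by rewrite ltnNge subset_leq_card.
  - apply/negP => /eqP Y0; move: ht; rewrite Y0 cards0 addn0.
    by rewrite ltnNge subset_leq_card.
  - move=> x y; rewrite !inE => hx hy.
    have := ltn_ord t; rewrite -/(a x) -/(b y); lia.
exfalso.
have h1 : (\sum_(t < K) (#|X t| + #|Y t|) <= K * q)%N.
  apply: leq_trans (_ : \sum_(t < K) q <= _)%N.
    apply: leq_sum => t _; move: hall; rewrite negb_exists => /forallP /(_ t).
    by rewrite -leqNgt.
  by rewrite sum_nat_const card_ord.
rewrite big_split /= sumX sumY in h1.
have h2 := leq_add (card_fib_sum A) (card_fib_sum B).
have h3 := card_Zres_ge.
rewrite -/a -/b -/K -/q in h2 h3 h1.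
have : (q * K < \sum_x a x + \sum_x b x)%N.
  by apply: leq_ltn_trans h3 _; apply: leq_trans hAB h2.
rewrite mulnC; lia.
Qed.

End Step.


Definition Gen (M : nat) : Prop :=
  forall A : nat -> {set 'I_M}, (forall i, A i \subset Zres M) ->
  (forall j, j < 4 -> #|Zres M| < #|A j.*2| + #|A j.*2.+1|) ->
  forall n, n %% 24 = 8 -> exists x : nat -> 'I_M,
    (forall i, i < 8 -> x i \in A i) /\ \sum_(i < 8) x i = n %[mod M].

Lemma Gen_step M p : 0 < M -> prime p -> 5 <= p -> coprime M p -> Gen M -> Gen (M * p).
Proof.
move=> M0 pP p5 co IH A sA hA n hn.
have op : odd p by case: (even_prime pP) => // p2; rewrite p2 in p5.
have hp := odd_double_half p; rewrite op -addnn in hp.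
have qge := card_Qp pP op.
have qle : #|Qp p| <= p by apply: leq_trans (max_card _) _; rewrite card_Fp.
have [X0 [Y0 [X0n Y0n hXY0 hf0]]] := levelset M0 pP co (sA 0) (sA 1) (hA 0 isT).
have [X1 [Y1 [X1n Y1n hXY1 hf1]]] := levelset M0 pP co (sA 2) (sA 3) (hA 1 isT).
have [X2 [Y2 [X2n Y2n hXY2 hf2]]] := levelset M0 pP co (sA 4) (sA 5) (hA 2 isT).
have [X3 [Y3 [X3n Y3n hXY3 hf3]]] := levelset M0 pP co (sA 6) (sA 7) (hA 3 isT).
have q2 : p <= (#|Qp p|).*2.+1 by rewrite -addnn; lia.
have [u0 [u1 [u2 [u3 [u4 [u5 [u6 [u7 [[u0X u1Y u2X u3Y] [u4X u5Y u6X u7Y hn']]]]]]]]]] :=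
  four_sum pP p5 q2 qle X0n Y0n X1n Y1n X2n Y2n X3n Y3n hXY0 hXY1 hXY2 hXY3 (n%:R)%R.
pose us := [:: u0; u1; u2; u3; u4; u5; u6; u7].
pose ux i := nth 0%R us i.
pose F i := fib M0 pP (A i) (ux i).
have hF1 : forall i, F i \subset Zres M by move=> i; apply: fib_sub.
have hF2 : forall j, j < 4 -> #|Zres M| < #|F j.*2| + #|F j.*2.+1|.
  move=> [|[|[|[|j]]]] // _.
  + exact: hf0.
  + exact: hf1.
  + exact: hf2.
  + exact: hf3.
have [y [hy hsum]] := IH F hF1 hF2 n hn.
exists (fun i => chin M0 pP (ux i) (y i)); split.
  by move=> i /hy; rewrite inE.
apply/eqP; rewrite chinese_remainder //; apply/andP; split.
  rewrite -modn_summ.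
  under eq_bigr => i _ do rewrite (chin_modM M0 pP co).
  by apply/eqP.
rewrite -modn_summ.
under eq_bigr => i _ do rewrite (chin_modp M0 pP co).
rewrite -!(val_Fp_nat pP); apply/eqP; congr nat_of_ord.
rewrite natr_sum.
under eq_bigr => i _ do rewrite natr_Zp.
rewrite hn' !big_ord_recr big_ord0 /=.
by rewrite /ux /= add0r.
Qed.


Lemma sq24 k : k < 24 -> coprime (k ^ 2 %% 24) 24 ==> (k ^ 2 %% 24 == 1).
Proof. by do 24 (case: k => [|k]; first by []). Qed.

Lemma Zres24 (a : 'I_24) : a \in Zres 24 -> nat_of_ord a = 1.
Proof.
rewrite inE => /andP [ca /existsP [h /eqP hh]].
rewrite -hh -modnXm in ca *.
have := sq24 (ltn_pmod h (isT : 0 < 24)).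
by rewrite ca => /eqP.
Qed.

Lemma Gen24 : Gen 24.
Proof.
move=> A sA hA n hn.
pose o : 'I_24 := Ordinal (isT : 1 < 24).
have pair (B C : {set 'I_24}) : B \subset Zres 24 -> C \subset Zres 24 ->
    #|Zres 24| < #|B| + #|C| -> o \in B /\ o \in C.
  move=> sB sC h.
  have hB := subset_leq_card sB; have hC := subset_leq_card sC.
  have Bn : B != set0 by rewrite -card_gt0; lia.
  have Cn : C != set0 by rewrite -card_gt0; lia.
  have [b bB] := set0Pn _ Bn; have [c cC] := set0Pn _ Cn.
  have eb : b = o by apply: val_inj; apply: Zres24; apply: (subsetP sB).
  have ec : c = o by apply: val_inj; apply: Zres24; apply: (subsetP sC).
  by rewrite -{1}eb -ec.
have key : forall i, i < 8 -> o \in A i.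
  move=> [|[|[|[|[|[|[|[|i]]]]]]]] // _.
  - exact: (pair _ _ (sA 0) (sA 1) (hA 0 isT)).1.
  - exact: (pair _ _ (sA 0) (sA 1) (hA 0 isT)).2.
  - exact: (pair _ _ (sA 2) (sA 3) (hA 1 isT)).1.
  - exact: (pair _ _ (sA 2) (sA 3) (hA 1 isT)).2.
  - exact: (pair _ _ (sA 4) (sA 5) (hA 2 isT)).1.
  - exact: (pair _ _ (sA 4) (sA 5) (hA 2 isT)).2.
  - exact: (pair _ _ (sA 6) (sA 7) (hA 3 isT)).1.
  - exact: (pair _ _ (sA 6) (sA 7) (hA 3 isT)).2.
exists (fun _ => o); split => //.
by rewrite sum_nat_const card_ord hn.
Qed.

Lemma Wmod_S w : 3 <= w -> Wmod w.+1 = if prime w then Wmod w * w else Wmod w.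
Proof.
move=> hw; rewrite /Wmod big_mkcond big_nat_recr //= [in RHS]big_mkcond.
by case: (prime w); rewrite ?muln1 // mulnA.
Qed.

Lemma Wmod4 : Wmod 4 = 24.
Proof. by rewrite /Wmod big_mkcond big_nat_recr //= big_geq. Qed.

Lemma Wmod_pos w : 0 < Wmod w.
Proof.
rewrite /Wmod muln_gt0 /=; apply: prodn_cond_gt0 => i; exact: prime_gt0.
Qed.

Lemma coprime_Wmod w : 5 <= w -> prime w -> coprime (Wmod w) w.
Proof.
move=> w5 pw; rewrite /Wmod coprimeMl; apply/andP; split.
  have -> : 8 = 2 ^ 3 by [].
  rewrite coprime_pexpl // prime_coprime // dvdn_prime2 //.
  by apply/eqP => e; rewrite -e in w5.
rewrite big_nat_cond; apply: (big_ind (fun m => coprime m w)).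
- exact: coprime1n.
- by move=> x y cx cy; rewrite coprimeMl cx cy.
move=> i /andP [/andP [_ iw] ip].
by rewrite prime_coprime // dvdn_prime2 // ltn_eqF.
Qed.

Lemma Gen_Wmod w : 4 <= w -> Gen (Wmod w).
Proof.
elim: w => [//|w IH] hw.
case: (leqP w 3) => h3.
  have -> : w = 3 by lia.
  rewrite Wmod4; exact: Gen24.
rewrite Wmod_S; last lia.
have IH' := IH h3.
case pw: (prime w) => //.
apply: Gen_step => //.
- exact: Wmod_pos.
- have : w != 4 by apply/eqP => e; rewrite e in pw.
  lia.
- apply: coprime_Wmod => //.
  have : w != 4 by apply/eqP => e; rewrite e in pw.
  lia.
Qed.

Lemma d24_Wmod w : 4 <= w -> 24 %| Wmod w.
Proof.
elim: w => [//|w IH] hw.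
case: (leqP w 3) => h3.
  have -> : w = 3 by lia.
  by rewrite Wmod4.
rewrite Wmod_S; last lia.
by case: (prime w); [apply: dvdn_mulr | ]; apply: IH.
Qed.

Theorem lemma3p4 (w : nat) (E : {set 'I_(Wmod w)}) :
  4 <= w ->
  E \subset Zres (Wmod w) ->
  2 * #|E| > #|Zres (Wmod w)| ->
  forall n : int, (n = 8 %[mod 24])%Z ->
  exists b : 'I_8 -> 'I_(Wmod w),
    (forall i, b i \in E) /\
    (n = (\sum_(i < 8) (b i : nat))%:Z %[mod (Wmod w)%:Z])%Z.
Proof.
move=> hw sE hE n hn.
have d24 := d24_Wmod hw.
have W0 : 0 < Wmod w by exact: Wmod_pos.
set W := Wmod w in E sE hE d24 W0 *.
pose n' := `|(n %% (Posz W))%Z|%N.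
have nz : (n %% (Posz W))%Z = (Posz n').
  by rewrite /n' gez0_abs // modz_ge0 // -lt0n W0.
have e1 : ((n %% (Posz W))%Z %% 24)%Z = (n %% 24)%Z.
  case/dvdnP: d24 => k hk.
  by rewrite [in RHS](divz_eq n (Posz W)) hk PoszM mulrA modzMDl.
have hn' : n' %% 24 = 8.
  have : ((n' %% 24)%N : int) = 8.
    by rewrite -modz_nat -nz e1 hn.
  by move=> [].
have hA : forall j, j < 4 -> #|Zres W| < #|(fun _ : nat => E) j.*2| + #|(fun _ : nat => E) j.*2.+1|.
  by move=> j _ /=; rewrite addnn -mul2n.
have [x [hx hs]] := Gen_Wmod hw (fun _ => sE) hA hn'.
exists (fun i => x i); split.
  by move=> i; apply: hx (ltn_ord i).
rewrite modz_nat hs -modz_nat -nz modz_mod.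
by [].
Qed.
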